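(* Fix $m\ge 2$. Assume that for all parameters $(s,c,k)$ an $m$-wise merger $\mathrm{mw\_merge}^s_{(c,k)}$ of order $(c,k)$ on $s$ inputs (over $X\cup\{\bot\}$) is given. Define recursively, for $1\le k\le n$, the generalized comparator network $\mathrm{mw\_sel}^n_k$ on input $\bar x\in X^n$ as follows. If $k=1$: output $\max^n(\bar x)$. If $k\ge 2$: choose integers $n_1\ge\dots\ge n_m\ge 0$ with $\sum_i n_i=n$ and $n_1<n$. Let $\bar x^1$ be the first $n_1$ elements of $\bar x$, $\bar x^2$ the next $n_2$ elements, and so on. For each row $1\le j\le n_1$ let $m'_j=\max\{i:n_i\ge j\}$ and let $\bar y^j=\mathrm{sort}^{m'_j}(\langle x^1_j,\dots,x^{m'_j}_j\rangle)$. For each $1\le i\le m$ let $k_i=\min(n_1,\lfloor k/i\rfloor)$, $l_i=\min(n_i,\lfloor k/i\rfloor)$ (so $k_i\ge l_i$), let $\bar t^i=\langle y^1_i,\dots,y^{n_i}_i\rangle$ and $\bar z^i=\mathrm{mw\_sel}^{n_i}_{l_i}(\bar t^i)$ (with $\bar z^i=\bar t^i$ if $l_i=0$). Let $s=\sum_i k_i$, $c=k_1$, $\overline{out}=\mathrm{suff}(l_1+1,\bar z^1)::\dots::\mathrm{suff}(l_m+1,\bar z^m)$, and $\overline{res}=\mathrm{mw\_merge}^s_{(c,k)}(\langle \mathrm{pref}(l_1,\bar z^1)::\bot^{k_1-l_1},\dots,\mathrm{pref}(l_m,\bar z^m)::\bot^{k_m-l_m}\rangle)$. Output $\mathrm{drop}(\bot,\overline{res})::\overline{out}$.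 Then for every choice of the splittings, $\mathrm{mw\_sel}^n_k$ is a $k$-selection network, i.e. for every $\bar x\in X^n$ the output $\mathrm{mw\_sel}^n_k(\bar x)$ is top $k$ sorted.
   Context: $X$ is a totally ordered set; $\bot\notin X$ is an auxiliary element with $\bot<x$ for all $x\in X$. A sequence is sorted if it is non-increasing. For $\bar x=\langle x_1,\dots,x_n\rangle$: $\bar x::\bar y$ is concatenation; $\mathrm{pref}(i,\bar x)=\langle x_1,\dots,x_i\rangle$, $\mathrm{suff}(i,\bar x)=\langle x_i,\dots,x_n\rangle$ (empty if $i>n$); $\bot^r$ is the sequence of $r$ copies of $\bot$; $\mathrm{drop}(b,\bar x)$ removes all occurrences of $b$ from $\bar x$. $\mathrm{sort}^p$ rearranges $p$ values into non-increasing order (a $p$-sorter). A (generalized) comparator network is a map on sequences obtained by composing sorters applied to chosen positions and fixed rearrangements of positions; in particular it permutes its input. $\max^n$ denotes a comparator network on $n$ inputs whose first output is the maximum of its inputs. A sequence $\bar x\in X^n$ is top $k$ sorted ($k\le n$) if $\langle x_1,\dots,x_k\rangle$ is sorted and $x_i\ge x_j$ for all $i\le k<j$. A $k$-selection network on $n$ inputs is a comparator network whose output is top $k$ sorted for every input. $m$-wise tuple: let $c,k,m\in\mathbb{N}$, $1\le k$, $k/m\le c$, $k_i=\min(c,\lfloor k/i\rfloor)$; a tuple $\langle\bar x^1,\dots,\bar x^m\rangle$ with $\bar x^i$ of length $k_i$ is $m$-wise of order $(c,k)$ if every $\bar x^i$ is sorted and $x^i_j\ge x^{i+1}_j$ for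 all $1\le i<m$, $1\le j\le|\bar x^{i+1}|$. An $m$-wise merger of order $(c,k)$ on $s$ inputs is a comparator network $f$ such that for every $m$-wise tuple $T=\langle\bar x^1,\dots,\bar x^m\rangle$ of order $(c,k)$ with $\sum_i|\bar x^i|=s$, $f(\bar x^1::\dots::\bar x^m)$ is top $k$ sorted. *)

(* Defs.v *)
From HB Require Import structures.
From mathcomp Require Import all_boot all_order all_fingroup.
Set Implicit Arguments. Unset Strict Implicit. Unset Printing Implicit Defensive.
Import Order.TTheory.

(* A step is either a sorter applied to the (distinct) positions [ps], writing
   the values back in non-increasing order along [ps], or a fixed
   rearrangement of positions (output wire i receives input wire p i). *)
Inductive cstep (n : nat) : Type :=
  | CSort of seq 'I_n
  | CPerm of 'S_n.

Definition net (n : nat) := seq (cstep n).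

Definition wf_step n (st : cstep n) : bool :=
  if st is CSort ps then uniq ps else true.
Definition wf_net n (N : net n) : bool := all (@wf_step n) N.

Section Run.
Variables (A : Type) (le : rel A).
Definition ge : rel A := fun a b => le b a.

Definition run_step n (st : cstep n) (t : n.-tuple A) : n.-tuple A :=
  match st with
  | CSort ps =>
      let vs := sort ge [seq tnth t j | j <- ps] in
      [tuple (if i \in ps then nth (tnth t i) vs (index i ps) else tnth t i)
            | i < n]
  | CPerm p => [tuple tnth t (p i) | i < n]
  end.

Definition run_net n (N : net n) (t : n.-tuple A) : n.-tuple A :=
  foldl (fun t st => run_step st t) t N.

Definition run_seq n (N : net n) (s : seq A) : seq A :=
  match (insub s : option (n.-tuple A)) with
  | Some t => val (run_net N t)
  | None => s
  end.

Definition top_k_sorted (k : nat) (s : seq A) : Prop :=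
  sorted ge (take k s) /\
  all (fun a => all (fun b => le b a) (drop k s)) (take k s).

Definition is_max_net n (N : net n) : Prop :=
  wf_net N /\
  forall t : n.-tuple A,
    if val (run_net N t) is y :: _ then all (fun z => le z y) t else True.
End Run.

(* ---------- X u {bot} as option X, None = bot < every element ---------- *)
Section Bot.
Context {d : Order.disp_t} {X : orderType d}.

Definition leo (a b : option X) : bool :=
  match a, b with
  | None, _ => true
  | Some _, None => false
  | Some x, Some y => (x <= y)%O
  end.

(* m-wise tuple of order (c,k) (k/m <= c read as k <= c*m) *)
Definition mwise_tuple (m c k : nat) (xs : seq (seq (option X))) : Prop :=
  [/\ 1 <= k, k <= c * m, size xs = m &
      forall i, i < m -> size (nth [::] xs i) = minn c (k %/ i.+1)] /\
  all (sorted (ge leo)) xs /\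
      forall i j, i.+1 < m -> j < size (nth [::] xs i.+1) ->
        leo (nth None (nth [::] xs i.+1) j) (nth None (nth [::] xs i) j).

Definition is_merger (m c k s : nat) (N : net s) : Prop :=
  wf_net N /\
  forall xs, mwise_tuple m c k xs -> sumn (map size xs) = s ->
    top_k_sorted leo k (run_seq leo N (flatten xs)).
End Bot.

Definition valid_split (m n : nat) (ns : seq nat) : Prop :=
  [/\ size ns = m, sorted geq ns, sumn ns = n & head 0 ns < n].

Fixpoint blocks {A : Type} (ns : seq nat) (x : seq A) : seq (seq A) :=
  if ns is n :: ns' then take n x :: blocks ns' (drop n x) else [::].

Section MwSel.
Context {d : Order.disp_t} {X : orderType d}.
Variables (m : nat)
  (merge : forall s c k : nat, net s)
  (maxnet : forall n : nat, net n)
  (split : seq nat -> nat -> nat -> seq nat).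
  (* split p n k = (n_1,...,n_m) chosen at the node with path p of the
     recursion tree (path = sequence of child indices), for parameters n,k *)

Fixpoint mw_sel_rec (fuel : nat) (path : seq nat) (n k : nat) (x : seq X)
    : seq X :=
  match fuel with
  | 0 => x
  | fuel'.+1 =>
    if k == 1 then run_seq (<=%O : rel X) (maxnet n) x else
    let ns := split path n k in
    let n1 := head 0 ns in
    let bs := blocks ns x in
    (* y^j = sort^{m'_j} <x^1_j, ..., x^{m'_j}_j>, rows j = 1..n1 *)
    let ys := [seq sort (ge (<=%O : rel X)) (pmap (fun b => onth b j) bs)
              | j <- iota 0 n1] in
    (* t^i = <y^1_i, ..., y^{n_i}_i> *)
    let ts := [seq pmap (fun y => onth y i) ys | i <- iota 0 m] in
    let ls := [seq minn (nth 0 ns i) (k %/ i.+1) | i <- iota 0 m] in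
    let ks := [seq minn n1 (k %/ i.+1) | i <- iota 0 m] in
    let zs := [seq (let li := nth 0 ls i in
                    let ti := nth [::] ts i in
                    if li == 0 then ti
                    else mw_sel_rec fuel' (rcons path i) (nth 0 ns i) li ti)
              | i <- iota 0 m] in
    let s := sumn ks in
    let c := nth 0 ks 0 in
    let out := flatten [seq drop (nth 0 ls i) (nth [::] zs i) | i <- iota 0 m] in
    let inp := flatten [seq map Some (take (nth 0 ls i) (nth [::] zs i))
                              ++ nseq (nth 0 ks i - nth 0 ls i) None
                       | i <- iota 0 m] in
    let res := run_seq leo (merge s c k) inp in
    pmap id res ++ out      (* drop(bot, res) :: out *)
  end.

(* fuel n.+1 suffices since every recursive call has n_i <= n_1 < n *)
Definition mw_sel (n k : nat) (x : seq X) : seq X :=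
  mw_sel_rec n.+1 [::] n k x.
End MwSel.

(* Main.v *)
Require Import Defs.
From HB Require Import structures.
From mathcomp Require Import all_boot all_order all_fingroup.
From mathcomp Require Import zify.
Set Implicit Arguments. Unset Strict Implicit. Unset Printing Implicit Defensive.
Import Order.TTheory.

Section TK.
Variables (A : Type) (le : rel A).
Hypothesis le_tr : transitive le.

Fixpoint tk (k : nat) (s : seq A) : bool :=
  match k, s with
  | 0, _ => true
  | _, [::] => true
  | k'.+1, a :: s' => all (fun b => le b a) s' && tk k' s'
  end.

Lemma ge_tr : transitive (ge le).
Proof. by move=> y x z; rewrite /ge => h1 h2; apply: le_tr h2 h1. Qed.

Lemma tkP k s : top_k_sorted le k s <-> tk k s.
Proof.
elim: s k => [|a s IH] [|k] //=; rewrite /top_k_sorted /=.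
rewrite (path_sortedE ge_tr); split.
- move=> [/andP [h1 h2] /andP [h3 h4]].
  rewrite -{1}(cat_take_drop k s) all_cat.
  have h1' : all (le^~ a) (take k s) by [].
  by rewrite h1' h3 /=; apply/IH; split.
- move=> /andP [h1 /IH [h2 h3]]; move: h1.
  rewrite -{1}(cat_take_drop k s) all_cat => /andP [h1 h1'].
  by split; [rewrite /ge h1 h2 | rewrite h1' h3].
Qed.

Lemma tk_take k s : tk k s -> sorted (ge le) (take k s).
Proof. by move/tkP => []. Qed.

Lemma tk_nth_count (x0 : A) k s j : tk k s -> j < k -> j < size s ->
  (forall a, le a a) ->
  j < count (fun a => le (nth x0 s j) a) s.
Proof.
move=> + + + lr; elim: s k j => [|a s IH] [|k] [|j] //=.
- by rewrite lr.
- move=> /andP [h1 h2] hj hs.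
  have hb : le (nth x0 s j) a by exact: (all_nthP x0 h1).
  rewrite hb add1n ltnS; exact: IH h2 hj hs.
Qed.

Lemma tk_count_nth (x0 : A) k s j v : tk k s -> j < k ->
  j < count (fun a => le v a) s -> le v (nth x0 s j).
Proof.
elim: s k j => [|a s IH] [|k] [|j] //=.
- move=> /andP [h1 _] _; case hv: (le v a) => //=.
  rewrite add0n -has_count => /(has_nthP x0) [i hi hvb].
  by rewrite -hv; apply: le_tr hvb (all_nthP x0 h1 i hi).
- move=> /andP [h1 h2] hj hc; apply: IH h2 hj _.
  by move: hc; case: (le v a) => /=; rewrite ?add1n ?add0n // => /ltnW.
Qed.
End TK.


Section XS.
Context {d : Order.disp_t} {X : orderType d}.
Local Notation le := (<=%O : rel X).
Local Notation tkx := (tk le).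

Lemma le_tr : transitive le.
Proof. by move=> y x z; apply: le_trans. Qed.

Lemma leo_tr : transitive (@leo d X).
Proof. by move=> [y|] [x|] [z|] //=; apply: le_trans. Qed.

Lemma tk_count_take k s v : tkx k s -> k <= size s ->
  minn k (count (fun a => v <= a)%O s) <= count (fun a => v <= a)%O (take k s).
Proof.
elim: s k => [|a s IH] [|k] //=; first by rewrite min0n.
move=> /andP [h1 h2] hk.
case hv: (v <= a)%O => /=.
- by rewrite !add1n minnSS ltnS; apply: IH.
- have -> : count (fun a => v <= a)%O s = 0.
    apply/eqP; rewrite -leqn0 leqNgt -has_count; apply/hasP => [[b hb hvb]].
    by move: hv; rewrite (le_trans hvb (allP h1 _ hb)).
  by rewrite minn0.
Qed.

Lemma tk_drop_count k s o : tkx k s -> o \in drop k s ->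
  k < count (fun a => o <= a)%O s.
Proof.
elim: s k => [|a s IH] [|k] //=.
- move=> _; rewrite inE => /orP [/eqP ->|ho]; first by rewrite lexx.
  by rewrite (leq_trans _ (leq_addl _ _)) // -has_count; apply/hasP; exists o.
- move=> /andP [h1 h2] ho.
  have hoa : (o <= a)%O by apply: (allP h1); apply: mem_drop ho.
  by rewrite hoa add1n ltnS; apply: IH.
Qed.

Lemma tk_cat k R O : tkx k R ->
  (forall o, o \in O -> k <= count (fun a => o <= a)%O R) -> tkx k (R ++ O).
Proof.
elim: R k => [|a R IH] [|k] //=.
- case: O => [|o O] //= _ h; have := h o; rewrite inE eqxx /= => /(_ isT).
  by rewrite ltn0.
- move=> /andP [h1 h2] hO.
  have hoa : forall o, o \in O -> (o <= a)%O.
    move=> o ho; case: (leP o a) => // hlt; have := hO o ho.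
    have -> : (o <= a)%O = false by rewrite leNgt hlt.
    have -> : count (fun a => o <= a)%O R = 0.
      apply/eqP; rewrite -leqn0 leqNgt -has_count; apply/hasP => [[b hb hvb]].
      have := le_lt_trans (allP h1 _ hb) hlt; by rewrite ltNge hvb.
    by [].
  rewrite all_cat h1 /=; apply/andP; split.
  + by apply/allP => o ho; apply: hoa.
  + apply: IH => // o ho; have := hO o ho; move=> /leq_trans h; have := h _ (leq_add (leq_b1 _) (leqnn _)); by rewrite add1n ltnS.
Qed.

Lemma tk_pmap k (s : seq (option X)) : tk (@leo d X) k s -> tkx k (pmap id s).
Proof.
elim: s k => [|[a|] s IH] [|k] //=.
- move=> /andP [h1 h2]; rewrite IH // andbT.
  apply/allP => b; rewrite mem_pmap => /mapP [[c|] hc] //= [->].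
  exact: (allP h1 _ hc).
- move=> /andP [h1 _].
  have -> : pmap id s = [::].
    elim: s h1 {IH} => [|[c|] s IHs] //=.
  by case: k.
Qed.

Lemma sorted_mwin (s : seq X) r : sorted (ge le) s ->
  sorted (ge (@leo d X)) (map Some s ++ nseq r None).
Proof.
elim: s => [|a s IH] /=.
- by elim: r => [|[|r] IHr] //=.
- move=> hs; have := IH (path_sorted hs); case: s hs {IH} => [|b s] /=.
  + by case: r.
  + by move=> /andP [hab _] ->; rewrite andbT.
Qed.
End XS.


Definition col {T : Type} (L : seq (seq T)) (j : nat) : seq T :=
  pmap (fun b => onth b j) L.

Lemma size_blocks {T : Type} ns (x : seq T) : size (blocks ns x) = size ns.
Proof. by elim: ns x => //= a ns IH x; rewrite IH. Qed.

Lemma map_size_blocks {T : Type} ns (x : seq T) : sumn ns <= size x ->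
  map size (blocks ns x) = ns.
Proof.
elim: ns x => //= a ns IH x h.
rewrite size_takel ?IH //; last by apply: leq_trans h; apply: leq_addr.
rewrite size_drop; lia.
Qed.

Lemma flatten_blocks {T : Type} ns (x : seq T) : sumn ns = size x ->
  flatten (blocks ns x) = x.
Proof.
elim: ns x => [|a ns IH] x /=; first by case: x.
move=> h; rewrite IH ?cat_take_drop // size_drop -h; lia.
Qed.

Lemma size_col {T : Type} (L : seq (seq T)) j :
  size (col L j) = count (fun b => j < size b) L.
Proof. by rewrite /col size_pmap; apply: eq_count => b; rewrite onthTE. Qed.

Definition szdec {T : Type} := fun a b : seq T => size b <= size a.

Lemma col_nth {T : Type} (x0 : T) (L : seq (seq T)) i j :
  sorted szdec L -> j < size (col L i) ->
  i < size (nth [::] L j) /\ nth x0 (col L i) j = nth x0 (nth [::] L j) i.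
Proof.
elim: L j => [|l L IH] j //= hs.
rewrite /col /=; case hl: (onth l i) => [a|] /=.
- case: j => [|j] /=.
  + by move=> _; rewrite -onthTE hl; split=> //; symmetry; exact: onth_nth hl.
  + move=> hj; apply: IH => //; exact: path_sorted hs.
- have -> : pmap (fun b => onth b i) L = [::].
    have hli : size l <= i by rewrite -onthNE hl.
    clear hl; move: hs hli; elim: L {IH} l => [|l' L IHL] l //= /andP [h1 h2] hli.
    have hl' : onth l' i = None by apply: onth_default; apply: leq_trans h1 hli.
    by rewrite hl' /=; apply: (IHL l') => //; apply: leq_trans h1 hli.
  by [].
Qed.

Lemma col_size_ok {T : Type} (L : seq (seq T)) i j :
  j < size L -> i < size (nth [::] L j) -> sorted szdec L -> j < size (col L i).
Proof.
elim: L j => [|l L IH] j //= hj hi hs.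
rewrite /col /=; case hl: (onth l i) => [a|] /=.
- case: j hj hi => [|j] //= hj hi; rewrite ltnS; apply: IH => //; exact: path_sorted hs.
- exfalso; have hli : size l <= i by rewrite -onthNE hl.
  case: j hj hi => [|j] /= hj hi; first by move: hli; rewrite leqNgt hi.
  have : size (nth [::] L j) <= size l.
    move: hs; rewrite (path_sortedE _).
    + by move=> /andP [/all_nthP h _]; apply: (h [::]).
    + by move=> b a c; rewrite /szdec => h1 h2; apply: leq_trans h2 h1.
  by move=> h; move: hi; rewrite ltnNge (leq_trans h hli).
Qed.

Lemma sorted_map_iota {T : Type} (r : rel T) (F : nat -> T) a N :
  (forall j, r (F j) (F j.+1)) -> sorted r (map F (iota a N)).
Proof.
move=> h; elim: N a => [|N IH] a //=; case: N IH => //= N IH.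
by rewrite h /=; have := IH a.+1.
Qed.

Lemma count_ltn_iota a N : count (fun j => j < a) (iota 0 N) = minn a N.
Proof.
elim: N => [|N IH]; first by rewrite minn0.
rewrite -addn1 iotaD count_cat IH /= add0n addn0.
case: (ltnP N a) => h /=; lia.
Qed.

Lemma geq_tr : transitive geq.
Proof. by move=> b a c h1 h2; apply: leq_trans h2 h1. Qed.

Lemma count_geq_ns (ns : seq nat) i j : sorted geq ns ->
  (i < count (fun a => j < a) ns) = (j < nth 0 ns i).
Proof.
elim: ns i => [|a ns IH] i //=; first by rewrite nth_nil.
move=> hs; case: (ltnP j a) => h.
- case: i => [|i] //=; rewrite add1n ltnS; apply: IH; exact: path_sorted hs.
- have hall : all (fun b => b <= a) ns.
    by move: hs; rewrite (path_sortedE geq_tr)=> /andP [h1 _]; exact: h1.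
  have -> : count (fun a0 => j < a0) ns = 0.
    apply/eqP; rewrite -leqn0 leqNgt -has_count; apply/hasP => [[b hb hjb]].
    by move: (leq_trans hjb (allP hall _ hb)); rewrite ltnNge h.
  case: i => [|i] /=; first by move: h; rewrite leqNgt => /negbTE ->.
  symmetry; apply/negbTE; rewrite -leqNgt.
  case: (ltnP i (size ns)) => hi.
  + exact: leq_trans (all_nthP 0 hall i hi) h.
  + by rewrite nth_default.
Qed.

Lemma count_dom {T : Type} (le : rel T) (x0 : T) (v : T) (a b : seq T) :
  (forall x y z, le x y -> le y z -> le x z) ->
  size b <= size a ->
  (forall j, j < size b -> le (nth x0 b j) (nth x0 a j)) ->
  count (le v) b <= count (le v) a.
Proof.
move=> tr; elim: b a => [|y b IH] [|z a] //= hs h.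
apply: leq_add.
- have := h 0 isT; rewrite /= => hyz.
  by case hv: (le v y) => //=; rewrite (tr _ _ _ hv hyz).
- apply: IH => // j hj; exact: (h j.+1).
Qed.

Lemma perm_flatten_map {T : eqType} {I : eqType} (f g : I -> seq T) (s : seq I) :
  (forall i, i \in s -> perm_eq (f i) (g i)) ->
  perm_eq (flatten (map f s)) (flatten (map g s)).
Proof.
elim: s => //= a s IH h; apply: perm_cat; first by apply: h; rewrite inE eqxx.
by apply: IH => i hi; apply: h; rewrite inE hi orbT.
Qed.

Lemma perm_flatten_cat {T : eqType} {I : Type} (f g : I -> seq T) (s : seq I) :
  perm_eq (flatten (map f s) ++ flatten (map g s)) (flatten [seq f i ++ g i | i <- s]).
Proof.
elim: s => //= a s IH.
rewrite -!catA perm_cat2l perm_catCA perm_cat2l; exact: IH.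
Qed.

Lemma col_cons {T : Type} (l : seq T) L j :
  col (l :: L) j = (if onth l j is Some a then [:: a] else [::]) ++ col L j.
Proof. by rewrite /col /=; case: (onth l j). Qed.

Lemma flatten_onth {T : Type} (l : seq T) N : size l <= N ->
  flatten [seq (if onth l j is Some a then [:: a] else [::]) | j <- iota 0 N] = l.
Proof.
elim: l N => [|a l IH] N h.
- by elim: (iota 0 N) => //= j s ->; rewrite onth0n.
- case: N h => [|N] //= h; congr (_ :: _).
  rewrite -[1]/(1 + 0) iotaDl -map_comp; exact: IH.
Qed.

Lemma perm_transpose {T : eqType} (L : seq (seq T)) N :
  all (fun b => size b <= N) L ->
  perm_eq (flatten [seq col L j | j <- iota 0 N]) (flatten L).
Proof.
elim: L => [|l L IH] /=.
- by move=> _; elim: (iota 0 N).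
- move=> /andP [hl hL].
  have -> : [seq col (l :: L) j | j <- iota 0 N] =
     [seq (if onth l j is Some a then [:: a] else [::]) ++ col L j | j <- iota 0 N].
    by apply: eq_map => j; rewrite col_cons.
  apply: perm_trans; first by rewrite perm_sym; apply: perm_flatten_cat.
  by rewrite flatten_onth // perm_cat2l; apply: IH.
Qed.


Lemma map_nth_index (T : eqType) (U : Type) (ps : seq T) (vs : seq U) (g : T -> U) :
  uniq ps -> size vs = size ps -> map (fun i => nth (g i) vs (index i ps)) ps = vs.
Proof.
case: vs => [|v0 vs] hu hs; first by case: ps hu hs.
case: ps hu hs => [|p0 ps] // hu hs.
apply: (@eq_from_nth _ v0); first by rewrite size_map.
move=> j; rewrite size_map => hj; rewrite (nth_map p0) // index_uniq //.
by apply: set_nth_default; rewrite hs.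
Qed.

Section Net.
Variables (A : eqType) (le : rel A).

Lemma run_step_perm n (st : cstep n) (t : n.-tuple A) :
  wf_step st -> perm_eq (run_step le st t) t.
Proof.
case: st => [ps|p] /=.
- move=> hu.
  set vs := sort _ _.
  set f := fun i : 'I_n => if i \in ps then nth (tnth t i) vs (index i ps) else tnth t i.
  rewrite /= -[X in perm_eq _ X]map_tnth_enum -/(map f _).
  have hsv : size vs = size ps by rewrite size_sort size_map.
  have e1 : perm_eq (enum 'I_n) (ps ++ [seq i <- enum 'I_n | predC (mem ps) i]).
    rewrite -(perm_filterC (mem ps) (enum 'I_n)) perm_cat2r.
    apply: uniq_perm => //; first by rewrite filter_uniq // enum_uniq.
    by move=> i; rewrite mem_filter mem_enum andbT.
  apply: (perm_trans (perm_map f e1)).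
  rewrite perm_sym; apply: (perm_trans (perm_map (tnth t) e1)); rewrite perm_sym.
  rewrite !map_cat; apply: perm_cat.
  + have -> : map f ps = vs.
      rewrite -(map_nth_index (fun i => tnth t i) hu hsv).
      by apply/eq_in_map => i hi; rewrite /f hi.
    by rewrite /vs perm_sort.
  + have -> : map f [seq i <- enum 'I_n | predC (mem ps) i] = map (tnth t) [seq i <- enum 'I_n | predC (mem ps) i] by apply/eq_in_map => i; rewrite mem_filter /f /= => /andP [hi _]; rewrite (negbTE hi). by [].
- move=> _ /=.
  rewrite -[X in perm_eq _ X]map_tnth_enum.
  rewrite (map_comp (tnth t) p); apply: perm_map.
  apply: uniq_perm; first by rewrite map_inj_uniq ?enum_uniq //; apply: perm_inj.
  + exact: enum_uniq.
  + move=> i; rewrite mem_enum; apply/mapP; exists (p^-1 i)%g; first by rewrite mem_enum.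
    by rewrite permKV.
Qed.

Lemma run_net_perm n (N : net n) (t : n.-tuple A) :
  wf_net N -> perm_eq (run_net le N t) t.
Proof.
rewrite /run_net; elim: N t => //= st N IH t /andP [h1 h2].
apply: perm_trans (IH _ h2) _; exact: run_step_perm.
Qed.

Lemma run_seq_perm n (N : net n) (s : seq A) :
  wf_net N -> perm_eq (run_seq le N s) s.
Proof.
rewrite /run_seq; case: insubP => [t _ <- h|_ _]; [exact: run_net_perm | exact: perm_refl].
Qed.

Lemma run_seq_val n (N : net n) (t : n.-tuple A) :
  run_seq le N t = run_net le N t.
Proof. by rewrite /run_seq valK. Qed.
End Net.


Lemma leq_sumn_map {I : eqType} (f g : I -> nat) (s : seq I) :
  (forall i, i \in s -> f i <= g i) -> sumn (map f s) <= sumn (map g s).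
Proof.
elim: s => //= a s IH h; apply: leq_add; first by apply: h; rewrite inE eqxx.
by apply: IH => i hi; apply: h; rewrite inE hi orbT.
Qed.

Lemma sumn_map_const {I : eqType} (f : I -> nat) (s : seq I) c :
  (forall i, i \in s -> f i = c) -> sumn (map f s) = size s * c.
Proof.
elim: s => //= a s IH h; rewrite IH ?h ?inE ?eqxx // ?mulSn //.
by move=> i hi; apply: h; rewrite inE hi orbT.
Qed.

Lemma arith_bound k I : 0 < I ->
  k <= sumn [seq minn (k %/ A.+1) (k %/ I).+1 | A <- iota 0 I].
Proof.
move=> hI; set J := (k %/ I).+1; set a := k %/ J.
have hJ : 0 < J by [].
have haI : a < I by rewrite /a ltn_divLR // mulnC; apply: ltn_ceil.
have -> : I = a + (1 + (I - a.+1)) by lia.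
rewrite iotaD map_cat sumn_cat iotaD map_cat sumn_cat /= add0n.
rewrite (@sumn_map_const _ _ _ J); last first.
  move=> A; rewrite mem_iota add0n => /andP [_ hA].
  apply/minn_idPr; rewrite leq_divRL //.
  rewrite mulnC; apply: leq_trans (leq_divM k J); rewrite leq_mul2r hA orbT //.
rewrite size_iota addn0.
have hk := divn_eq k J; have hr := ltn_mod k J.
rewrite -/a in hk.
set r := k %% J in hk hr.
rewrite hJ in hr.
have hra : r <= k %/ a.+1 by rewrite leq_divRL //; nia.
apply: leq_trans (leq_add (leqnn _) (leq_addr _ _)).
rewrite {1}hk leq_add2l leq_min hra; exact: ltnW.
Qed.

Lemma pmap_inp {T : Type} {I : Type} (A : I -> seq T) (r : I -> nat) (s : seq I) :
  pmap id (flatten [seq map Some (A i) ++ nseq (r i) None | i <- s]) =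
  flatten (map A s).
Proof.
elim: s => //= i s IH; rewrite !pmap_cat IH; congr (_ ++ _).
have -> : pmap id (nseq (r i) (@None T)) = [::] by elim: (r i).
by rewrite cats0; elim: (A i) => //= a l ->.
Qed.

Lemma perm_cnt {T : eqType} (s1 s2 : seq T) (p : pred T) :
  perm_eq s1 s2 -> count p s1 = count p s2.
Proof. by move/seq.permP. Qed.

Section Final.
Context {d : Order.disp_t} {X : orderType d}.
Local Notation le := (<=%O : rel X).

Variables (m k : nat) (nn : nat -> nat) (t z : nat -> seq X).
Let l i := minn (nn i) (k %/ i.+1).
Hypotheses (hk : 1 <= k)
  (hsz : forall i, i < m -> size (t i) = nn i)
  (hdec : forall i, i.+1 < m -> nn i.+1 <= nn i)
  (hdom : forall x0 i j, i.+1 < m -> j < size (t i.+1) ->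
            (nth x0 (t i.+1) j <= nth x0 (t i) j)%O)
  (hperm : forall i, i < m -> perm_eq (z i) (t i))
  (htk : forall i, i < m -> tk le (l i) (z i)).

Lemma count_t_mono v i i' : i < m -> i' <= i ->
  count (fun a => v <= a)%O (t i) <= count (fun a => v <= a)%O (t i').
Proof.
move=> hi; elim: i hi => [|i IH] hi hi'.
- by move: hi'; rewrite leqn0 => /eqP ->.
- case: (ltnP i' i.+1) => h; last first.
    by have -> : i' = i.+1 by apply/eqP; rewrite eqn_leq hi' h.
  apply: leq_trans (IH (ltnW hi) h).
  apply: (@count_dom _ le v v); first by move=> x y w; apply: le_trans.
  + by rewrite hsz // hsz ?hdec // ltnW.
  + by move=> j hj; apply: hdom.
Qed.

Lemma final_ok (res : seq (option X)) (r : nat -> nat) :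
  perm_eq res (flatten [seq map Some (take (l i) (z i)) ++ nseq (r i) None
                         | i <- iota 0 m]) ->
  tk (@leo d X) k res ->
  tk le k (pmap id res ++ flatten [seq drop (l i) (z i) | i <- iota 0 m]).
Proof.
move=> hp htr; apply: tk_cat; first exact: tk_pmap.
move=> o /flatten_mapP [i]; rewrite mem_iota add0n => /andP [_ hi] ho.
rewrite (perm_cnt _ (perm_pmap id hp)) pmap_inp count_flatten -map_comp.
have hzs : size (z i) = nn i by rewrite (perm_size (hperm hi)) hsz.
have hc : l i < count (fun a => o <= a)%O (z i) by apply: tk_drop_count (htk hi) ho.
have hli : l i < nn i.
  have : 0 < size (drop (l i) (z i)) by rewrite -has_predT; apply/hasP; exists o.
  rewrite size_drop hzs; lia.
have hli' : l i = k %/ i.+1 by move: hli; rewrite /l; move: (k %/ i.+1) => f; lia.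
set J := (k %/ i.+1).+1.
apply: leq_trans (arith_bound k (ltn0Sn i)) _.
have -> : m = i.+1 + (m - i.+1) by lia.
rewrite iotaD map_cat sumn_cat; apply: leq_trans (leq_addr _ _).
apply: leq_sumn_map => i'; rewrite mem_iota add0n => /andP [_ hi'] /=.
have hi'm : i' < m by apply: leq_trans hi' hi.
have h1 := tk_count_take o (htk hi'm) (_ : l i' <= size (z i')).
have hcz : count (fun a => o <= a)%O (z i') = count (fun a => o <= a)%O (t i').
  exact: perm_cnt (hperm hi'm).
have hct : count (fun a => o <= a)%O (t i) <= count (fun a => o <= a)%O (t i').
  exact: count_t_mono.
have hcti : count (fun a => o <= a)%O (z i) = count (fun a => o <= a)%O (t i).
  exact: perm_cnt (hperm hi).
have hsz' : count (fun a => o <= a)%O (t i') <= nn i'.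
  by rewrite -hsz // count_size.
have hzs' : size (z i') = nn i' by rewrite (perm_size (hperm hi'm)) hsz.
have := h1; rewrite hzs' /l; move=> /(_ (geq_minl _ _)).
move: hc; rewrite hcti hli' /l => hc.
rewrite hcz; move: hct hsz' hc; set ci' := count _ (t i'); set ci := count _ (t i); set ct := count _ (take _ _); move: (k %/ i'.+1) (k %/ i.+1) => f' f; lia.
Qed.

Lemma nth_mwin (x0 : X) (s : seq X) r j :
  nth None (map Some s ++ nseq r None) j = if j < size s then Some (nth x0 s j) else None.
Proof.
rewrite nth_cat size_map; case: ifP => h; first by rewrite (nth_map x0).
by rewrite nth_nseq; case: ifP.
Qed.

Lemma mwise_ok (x0 : X) c (kk : nat -> nat) :
  k <= c * m ->
  (forall i, i < m -> kk i = minn c (k %/ i.+1)) ->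
  (forall i, i < m -> l i <= kk i) ->
  mwise_tuple m c k [seq map Some (take (l i) (z i)) ++ nseq (kk i - l i) None
                    | i <- iota 0 m].
Proof.
move=> hkc hkk hlk.
have hzs : forall i, i < m -> size (z i) = nn i.
  by move=> i hi; rewrite (perm_size (hperm hi)) hsz.
have hst : forall i, i < m -> size (take (l i) (z i)) = l i.
  by move=> i hi; rewrite size_takel // hzs // /l geq_minl.
split; [split=> //|split].
- by rewrite size_map size_iota.
- move=> i hi; rewrite (nth_map 0) ?size_iota // nth_iota // add0n size_cat size_map.
  rewrite size_nseq hst // -hkk // subnKC //; exact: hlk.
- apply/allP => xs /mapP [i hi ->]; apply: sorted_mwin; apply: (tk_take le_tr).
  by apply: htk; move: hi; rewrite mem_iota add0n => /andP [].
- move=> i j hi hj; rewrite !(nth_map 0) ?size_iota ?(ltnW hi) // !nth_iota ?(ltnW hi) // !add0n.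
  rewrite !(nth_mwin x0) !hst ?(ltnW hi) //.
  case: ifP => hj1 //.
  have hll : l i.+1 <= l i.
    have hd : k %/ i.+2 <= k %/ i.+1 by apply: leq_div2l.
    have := hdec hi; move: hd; rewrite /l; move: (k %/ i.+2) (k %/ i.+1) => a b; lia.
  rewrite (leq_trans hj1 hll) /= !nth_take ?(leq_trans hj1 hll) //.
  set a := nth x0 (z i.+1) j.
  have h1 : j < count (fun b => a <= b)%O (z i.+1).
    apply: (tk_nth_count x0 (htk hi) hj1); first by rewrite hzs //; apply: leq_trans hj1 (geq_minl _ _).
    exact: lexx.
  rewrite (perm_cnt _ (hperm hi)) in h1.
  have h2 := leq_trans h1 (count_t_mono a hi (leqnSn i)).
  rewrite -(perm_cnt _ (hperm (ltnW hi))) in h2.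
  exact: (tk_count_nth le_tr x0 (htk (ltnW hi)) (leq_trans hj1 hll) h2).
Qed.
End Final.


Lemma ns_nth_le (ns : seq nat) i j : sorted geq ns -> i <= j -> nth 0 ns j <= nth 0 ns i.
Proof.
move=> hs hij; case: (ltnP j (size ns)) => hj; last by rewrite nth_default.
apply: (sorted_leq_nth geq_tr (fun a => leqnn a) 0 hs) => //.
  by rewrite inE (leq_ltn_trans hij hj).
Qed.

Lemma sumn_le_head (ns : seq nat) : sorted geq ns -> sumn ns <= size ns * head 0 ns.
Proof.
case: ns => [|a ns] //= hs.
have : all (fun b => b <= a) ns.
  by move: hs; rewrite (path_sortedE geq_tr) => /andP [].
elim: ns {hs} => [|b ns IH] /=; first by lia.
move=> /andP [hb /IH h]; rewrite mulSn; lia.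
Qed.

Section Main.
Context {d : Order.disp_t} {X : orderType d}.
Local Notation le := (<=%O : rel X).
Variables (m : nat) (merge : forall s c k : nat, net s) (maxnet : forall n : nat, net n)
  (split : seq nat -> nat -> nat -> seq nat).
Hypotheses (hm : 2 <= m)
  (hmerge : forall s c k : nat, is_merger (X := X) m c k (merge s c k))
  (hmax : forall n : nat, is_max_net (<=%O : rel X) (maxnet n))
  (hsplit : forall (p : seq nat) (n k : nat), 2 <= k <= n ->
              valid_split m n (split p n k)).

Lemma main_rec fuel : forall path n k (x : seq X), n < fuel -> 1 <= k <= n -> size x = n ->
  perm_eq (mw_sel_rec m merge maxnet split fuel path n k x) x /\
  tk le k (mw_sel_rec m merge maxnet split fuel path n k x).
Proof.
elim: fuel => [|fuel IH] path n k x hn hk hx //=.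
case: ifP => hk1.
- move/eqP: hk1 => ->.
  have hxn : size x == n by rewrite hx.
  have -> : x = val (Tuple hxn) by [].
  rewrite run_seq_val; have [hwf hmx] := hmax n.
  have hp := run_net_perm le (Tuple hxn) hwf.
  split; first exact: hp.
  have : (if tval (run_net le (maxnet n) (Tuple hxn)) is y :: _ then
            all (fun z => le z y) x else True) := hmx (Tuple hxn).
  have hp' : perm_eq (tval (run_net le (maxnet n) (Tuple hxn))) x := hp.
  move: hp'.
  case: (tval (run_net le (maxnet n) (Tuple hxn))) => [|y rest] //= hp' hall.
  rewrite andbT; apply/allP => b hb; apply: (allP hall).
  by rewrite /= -(perm_mem hp') inE hb orbT.
- have hk2 : 2 <= k <= n by move: hk hk1; case: k => [|[|k]].
  have [hsz hsrt hsum hhead] := hsplit path hk2.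
  set ns := split path n k in hsz hsrt hsum hhead *.
  set n1 := head 0 ns in hhead *.
  set bs := blocks ns x.
  set ys := [seq sort _ _ | j <- iota 0 n1].
  set ts := [seq pmap _ ys | i <- iota 0 m].
  set ls := [seq minn (nth 0 ns i) (k %/ i.+1) | i <- iota 0 m].
  set ks := [seq minn n1 (k %/ i.+1) | i <- iota 0 m].
  set zs := [seq (if nth 0 ls i == 0 then _ else _) | i <- iota 0 m].
  set inp := flatten _.
  set res := run_seq leo _ inp.
  have x0 : X.
    have : 0 < size x by rewrite hx; lia.
    clear -x; by case: x.
  pose l i := minn (nth 0 ns i) (k %/ i.+1).
  pose t i := nth [::] ts i.
  pose z i := nth [::] zs i.
  have hls : forall i, i < m -> nth 0 ls i = l i.
    by move=> i hi; rewrite /ls (nth_map 0) ?size_iota // nth_iota.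
  have hks : forall i, i < m -> nth 0 ks i = minn n1 (k %/ i.+1).
    by move=> i hi; rewrite /ks (nth_map 0) ?size_iota // nth_iota.
  have hnsi : forall i, nth 0 ns i <= n1.
    by move=> i; rewrite /n1 -nth0; apply: ns_nth_le.
  have hdec : forall i, nth 0 ns i.+1 <= nth 0 ns i.
    by move=> i; apply: ns_nth_le.
  have hbsz : map size bs = ns by apply: map_size_blocks; rewrite hsum hx.
  have hsbs : size bs = m by rewrite size_blocks.
  have hbs_sorted : sorted szdec bs.
    by move: hsrt; rewrite -hbsz sorted_map.
  have hcolsz : forall j, size (col bs j) = count (fun a => j < a) ns.
    by move=> j; rewrite size_col -hbsz count_map.
  have hsys : size ys = n1 by rewrite size_map size_iota.
  have hys : forall j, j < n1 -> nth [::] ys j = sort (ge le) (col bs j).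
    by move=> j hj; rewrite /ys (nth_map 0) ?size_iota // nth_iota.
  have hyssz : forall j, j < n1 -> size (nth [::] ys j) = count (fun a => j < a) ns.
    by move=> j hj; rewrite hys // size_sort hcolsz.
  have hys_sorted : sorted szdec ys.
    apply: sorted_map_iota => j; rewrite /szdec !size_sort !hcolsz.
    by apply: sub_count => a /= h; apply: ltnW.
  have hys_ge : forall j, j < n1 -> sorted (ge le) (nth [::] ys j).
    by move=> j hj; rewrite hys //; apply: sort_sorted => a b; apply: le_total.
  have ht : forall i, i < m -> t i = col ys i.
    by move=> i hi; rewrite /t /ts (nth_map 0) ?size_iota // nth_iota.
  have htsz : forall i, i < m -> size (t i) = nth 0 ns i.
    move=> i hi; rewrite ht // size_col /ys count_map.
    rewrite (@eq_in_count _ _ (fun j => j < nth 0 ns i)).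
      by rewrite count_ltn_iota; apply/minn_idPl.
    move=> j; rewrite mem_iota add0n => /andP [_ hj] /=.
    by rewrite size_sort hcolsz count_geq_ns.
  have hdomt : forall x1 i j, i.+1 < m -> j < size (t i.+1) ->
            (nth x1 (t i.+1) j <= nth x1 (t i) j)%O.
    move=> x1 i j hi; rewrite !ht ?(ltnW hi) // => hj.
    have [h1 h2] := col_nth x1 hys_sorted hj.
    have hjy : j < size ys.
      by apply: leq_trans hj _; rewrite size_col count_size.
    have hj' : j < size (col ys i) by apply: col_size_ok => //; apply: ltnW.
    have [h3 h4] := col_nth x1 hys_sorted hj'.
    rewrite h2 h4; move: (hys_ge j (etrans (esym (f_equal (fun q => j < q) hsys)) hjy)) => /(sortedP x1) h.
    exact: h.
  have hperm_t : perm_eq (flatten ts) x.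
    apply: perm_trans (_ : perm_eq _ (flatten ys)) _.
      apply: perm_transpose; apply/allP => y /mapP [j _ ->].
      by rewrite size_sort /col size_pmap -hsbs count_size.
    apply: perm_trans (_ : perm_eq _ (flatten [seq col bs j | j <- iota 0 n1])) _.
      by apply: perm_flatten_map => j _; rewrite perm_sort.
    have hfb : flatten bs = x by apply: flatten_blocks; rewrite hsum hx.
    rewrite -[X in perm_eq _ X]hfb.
    apply: perm_transpose; apply/allP => b hb.
    have : size b \in ns by rewrite -hbsz; apply: map_f.
    move=> /nthP => /(_ 0) [i hi <-]; exact: hnsi.
  have hz : forall i, i < m -> perm_eq (z i) (t i) /\ tk le (l i) (z i).
    move=> i hi; rewrite /z /zs (nth_map 0) ?size_iota // nth_iota // add0n hls //.
    case: ifP => hl0.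
      by split=> //; rewrite (eqP hl0).
    apply: IH.
    - by apply: leq_ltn_trans (hnsi i) _; apply: leq_trans hhead _.
    - by rewrite lt0n hl0 /= /l geq_minl.
    - exact: htsz.
  pose kk i := minn n1 (k %/ i.+1).
  have hinp : inp = flatten [seq map Some (take (l i) (z i)) ++ nseq (kk i - l i) None
                            | i <- iota 0 m].
    congr flatten; apply/eq_in_map => i; rewrite mem_iota add0n => /andP [_ hi].
    by rewrite hls // hks.
  have hout : flatten [seq drop (nth 0 ls i) (nth [::] zs i) | i <- iota 0 m] =
              flatten [seq drop (l i) (z i) | i <- iota 0 m].
    congr flatten; apply/eq_in_map => i; rewrite mem_iota add0n => /andP [_ hi].
    by rewrite hls.
  have hc : nth 0 ks 0 = minn n1 k by rewrite hks ?divn1 //; lia.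
  have [hwfm hmm] := hmerge (sumn ks) (nth 0 ks 0) k.
  have hres_perm : perm_eq res inp by apply: run_seq_perm.
  have hkc : k <= minn n1 k * m.
    have := sumn_le_head hsrt; rewrite hsum hsz -/n1 => h.
    move: hk2 hm; nia.
  have hres_tk : tk (@leo d X) k res.
    apply/(tkP leo_tr); rewrite /res hinp; apply: hmm.
    - apply: (mwise_ok (nn := nth 0 ns) (t := t)) => //.
      + by move: hk2; lia.
      + by move=> i hi; apply: (proj1 (hz i hi)).
      + by move=> i hi; apply: (proj2 (hz i hi)).
      + by rewrite hc.
      + by move=> i hi; rewrite hc /kk; move: (leq_div k i.+1); move: (k %/ i.+1) => q; lia.
      + by move=> i hi; rewrite /kk; move: (hnsi i); move: (k %/ i.+1) => q; lia.
    - rewrite -map_comp /ks; congr sumn; apply/eq_in_map => i; rewrite mem_iota add0n => /andP [_ hi] /=.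
      rewrite size_cat size_map size_nseq size_takel.
        by rewrite subnKC // /kk /l; move: (hnsi i); lia.
      by rewrite (perm_size (proj1 (hz i hi))) htsz // /l geq_minl.
  have hpz : forall i, i < m -> perm_eq (z i) (t i) by move=> i hi; apply: (proj1 (hz i hi)).
  rewrite hout; split.
  - apply: perm_trans (_ : perm_eq _ (flatten [seq take (l i) (z i) | i <- iota 0 m] ++
                                      flatten [seq drop (l i) (z i) | i <- iota 0 m])) _.
      by rewrite perm_cat2r; have := perm_pmap id hres_perm; rewrite hinp pmap_inp.
    apply: perm_trans (perm_flatten_cat _ _ _) _.
    have -> : [seq take (l i) (z i) ++ drop (l i) (z i) | i <- iota 0 m] = [seq z i | i <- iota 0 m].
      by apply: eq_map => i; rewrite cat_take_drop.
    apply: perm_trans (_ : perm_eq _ (flatten [seq t i | i <- iota 0 m])) _.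
      by apply: perm_flatten_map => i; rewrite mem_iota add0n => /andP [_ hi]; apply: hpz.
    have hts : size ts = m by rewrite size_map size_iota.
    by rewrite /t -hts map_nth_iota0 // take_size.
  - have hk0 : 0 < k by move: hk2; lia.
    have hdec' : forall i, i.+1 < m -> nth 0 ns i.+1 <= nth 0 ns i by move=> i _; apply: hdec.
    have htkz : forall i, i < m -> tk le (l i) (z i) by move=> i hi; apply: (proj2 (hz i hi)).
    have hrp : perm_eq res (flatten [seq map Some (take (l i) (z i)) ++ nseq (kk i - l i) None
                            | i <- iota 0 m]) by rewrite -hinp.
    have := @final_ok d X m k (nth 0 ns) t z hk0 htsz hdec' hdomt hpz htkz res (fun i => kk i - l i) hrp hres_tk.
    exact.
Qed.

End Main.


Theorem mainTheorem3 (d : Order.disp_t) (X : orderType d) (m : nat)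
  (hm : 2 <= m)
  (merge : forall s c k : nat, net s)
  (hmerge : forall s c k : nat, is_merger (X := X) m c k (merge s c k))
  (maxnet : forall n : nat, net n)
  (hmax : forall n : nat, is_max_net (<=%O : rel X) (maxnet n))
  (split : seq nat -> nat -> nat -> seq nat)
  (hsplit : forall (p : seq nat) (n k : nat), 2 <= k <= n ->
              valid_split m n (split p n k))
  (n k : nat) (x : seq X) :
  1 <= k <= n -> size x = n ->
  top_k_sorted (<=%O : rel X) k (mw_sel m merge maxnet split n k x).
Proof.
move=> hk hx; apply/(tkP le_tr).
have [_ h] := main_rec hm hmerge hmax hsplit (fuel := n.+1) [::] (leqnn n.+1) hk hx.
exact: h.
Qed.
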